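(* Let $\tfrac12 H_{24}$ denote the halved $24$-cube (defined below). For each integer $c\in\{3,6,8,9,11,12\}\cup\{14,15,16,\dots,128\}$ there exists a set $C\subset V(\tfrac12 H_{24})$ whose characteristic function $\chi_C$ is a perfect coloring of $\tfrac12 H_{24}$ with parameters $((20+c,\,256-c)(c,\,276-c))$.
   Context: $E^n$ is the set of binary words of length $n$; the (Hamming) distance between two words is the number of positions where they differ, and the weight of a word is its number of ones. The halved $24$-cube $\tfrac12 H_{24}$ is the graph whose vertices are the even-weight words of $E^{24}$, two of them adjacent iff they are at Hamming distance exactly $2$ (it is regular of degree $276$; the analogous graph on odd-weight words is isomorphic to it). For a graph $G$ and a set $C$ with $\emptyset\neq C\subsetneq V(G)$, the characteristic function $\chi_C$ is a perfect coloring with parameters $((a,b)(c,d))$ if every vertex of $C$ has exactly $a$ neighbours in $C$ and exactly $b$ neighbours outside $C$, and every vertex outside $C$ has exactly $c$ neighbours in $C$ and exactly $d$ neighbours outside $C$. *)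

(* Defs.v *)
From mathcomp Require Import all_boot.
Set Implicit Arguments. Unset Strict Implicit. Unset Printing Implicit Defensive.

Definition word (n : nat) := {ffun 'I_n -> bool}.

Definition weight n (w : word n) : nat := #|[set i | w i]|.

Definition hdist n (u v : word n) : nat := #|[set i | u i != v i]|.

Definition halved_vertex (n : nat) := {w : word n | ~~ odd (weight w)}.

Definition halved_adj n (x y : halved_vertex n) : bool := hdist (val x) (val y) == 2.

Definition perfect_coloring (V : finType) (adj : rel V) (C : {set V})
    (a b c d : nat) : Prop :=
  set0 != C /\ C != [set: V] /\
  (forall x, x \in C ->
     #|[set y | adj x y & y \in C]| = a /\ #|[set y | adj x y & y \notin C]| = b) /\
  (forall x, x \notin C ->
     #|[set y | adj x y & y \in C]| = c /\ #|[set y | adj x y & y \notin C]| = d).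

(* Main.v *)
From Stdlib Require Import NArith Lia.
Require Import Defs.
From HB Require Import structures.
From mathcomp Require Import all_boot.
Set Implicit Arguments. Unset Strict Implicit. Unset Printing Implicit Defensive.
Definition colsN : seq N := map N.of_nat [:: 0; 64; 128; 256; 512; 1024; 217; 568; 523; 430; 1328; 377; 1224; 1202; 575; 1123; 1452; 1519; 1386; 516; 557; 565; 462; 528].
Definition col (k : nat) : N := nth 0%num colsN k.
Definition pairsL : seq (nat * nat) :=
  filter (fun ij => ij.1 < ij.2) (flatten [seq [seq (i, j) | j <- iota 0 24] | i <- iota 0 24]).
Definition Ncount (P : N -> bool) (s : N) : nat :=
  count (fun ij => P (N.lxor (N.lxor s (col ij.1)) (col ij.2))) pairsL.

Fixpoint allNr (f : N -> bool) (n : nat) (a : N) : bool :=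
  match n with 0 => true | S m => f a && allNr f m (N.succ a) end.
Definition allN f n := allNr f n 0%num.
Definition Goodb (P : N -> bool) (c : nat) : bool :=
  allN (fun s => Ncount P s == (if P s then 20 + c else c)) 2048.
Definition Tpred (s : N) : bool := List.existsb (N.eqb s) colsN.
Definition Hpred (s : N) : bool := N.ltb s 64.
Definition tr (P : N -> bool) (t : N) := fun s => P (N.lxor s t).
Definition tl : seq nat := [:: 0; 1; 2; 3; 28; 29; 30; 31].
Definition fr : seq nat := [:: 9; 10; 11; 12; 13; 14; 15; 24; 25; 26; 27; 28; 29; 30; 31].
Definition tlN : seq N := map N.of_nat tl.
Definition frN : seq N := map (fun k => N.of_nat (64 * k)) fr.
Definition base (k : nat) : N -> bool :=
  if k < 8 then tr Tpred (nth 0%num tlN k) else tr Hpred (nth 0%num frN (k - 8)).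
Definition wt (k : nat) : nat := if k < 8 then 3 else 8.
Definition Disjb : bool :=
  all (fun i => all (fun j => (i == j) || allN (fun s => ~~ (base i s && base j s)) 2048) (iota 0 23)) (iota 0 23).
Definition acoef (c : nat) := if c == 128 then 8 else (3 * c) %% 8.

Definition sel (c : nat) := iota 0 (acoef c) ++ iota 8 ((c - 3 * acoef c) %/ 8).
Definition cond (c : nat) := (c \in [:: 3; 6; 8; 9; 11; 12]) || (14 <= c <= 128).
Definition Selb : bool := all (fun c => cond c ==> [&& uniq (sel c), all (fun k => k < 23) (sel c) & sumn (map wt (sel c)) == c]) (iota 0 129).

Lemma T_ok : Goodb Tpred 3. Proof. vm_cast_no_check (erefl true). Qed.
Lemma H_ok : Goodb Hpred 8. Proof. vm_cast_no_check (erefl true). Qed.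
Lemma D_ok : Disjb. Proof. vm_cast_no_check (erefl true). Qed.
Lemma S_ok : Selb. Proof. vm_cast_no_check (erefl true). Qed.

Definition bnd (s : N) : Prop := N.shiftr s 11 = 0%num.

Lemma bnd_lxor a b : bnd a -> bnd b -> bnd (N.lxor a b).
Proof. rewrite /bnd => ha hb. by rewrite N.shiftr_lxor ha hb. Qed.

Lemma bnd_lt s : bnd s -> N.lt s 2048.
Proof.
rewrite /bnd N.shiftr_div_pow2 => h.
apply N.div_small_iff in h; [exact h | discriminate].
Qed.

Lemma lt_bnd s : N.lt s 2048 -> bnd s.
Proof.
rewrite /bnd N.shiftr_div_pow2 => h. by apply N.div_small.
Qed.

Lemma allNr_spec f n a : allNr f n a ->
  forall s, N.le a s -> N.lt s (a + N.of_nat n) -> f s.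
Proof.
elim: n a => [|n IH] a /=.
  move=> _ s h1 h2. exfalso. lia.
move=> /andP [fa rest] s h1 h2.
have [<-|ne] := N.eq_dec a s; first exact fa.
apply: (IH _ rest); lia.
Qed.

Lemma allN_spec f s : allN f 2048 -> bnd s -> f s.
Proof.
move=> h /bnd_lt hs. apply: (allNr_spec h); simpl; lia.
Qed.

Lemma bnd_col i : bnd (col i).
Proof.
rewrite /col.
do 24 (case: i => [|i]; first by vm_compute).
by rewrite nth_default.
Qed.

Lemma Good_of_b P c : Goodb P c -> forall s, bnd s -> Ncount P s = if P s then 20 + c else c.
Proof. move=> h s hs. exact: (eqP (allN_spec h hs)). Qed.

Definition Good P c := forall s, bnd s -> Ncount P s = if P s then 20 + c else c.

Lemma lxor_shuffle s t a b :
  N.lxor (N.lxor (N.lxor s t) a) b = N.lxor (N.lxor (N.lxor s a) b) t.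
Proof.
rewrite !N.lxor_assoc; congr N.lxor.
rewrite [N.lxor t _]N.lxor_comm N.lxor_assoc; done.
Qed.

Lemma Good_tr P c t : Good P c -> bnd t -> Good (tr P t) c.
Proof.
move=> G ht s hs.
have -> : Ncount (tr P t) s = Ncount P (N.lxor s t).
  rewrite /Ncount /tr; apply: eq_count => ij.
  by rewrite /= (lxor_shuffle s t).
by rewrite G //; apply: bnd_lxor.
Qed.

Lemma Ncount_or P Q s : bnd s -> (forall s', bnd s' -> ~~ (P s' && Q s')) ->
  Ncount (fun x => P x || Q x) s = Ncount P s + Ncount Q s.
Proof.
move=> hs dj; rewrite /Ncount -count_predUI.
have -> : count (predI (fun ij => P (N.lxor (N.lxor s (col ij.1)) (col ij.2)))
                 (fun ij => Q (N.lxor (N.lxor s (col ij.1)) (col ij.2)))) pairsL = 0.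
  apply/eqP; rewrite -leqn0 leqNgt -has_count; apply/hasPn => ij _ /=.
  apply: dj. apply bnd_lxor; [apply bnd_lxor; [exact hs | apply bnd_col] | apply bnd_col].
by rewrite addn0.
Qed.

Definition U (l : seq nat) (s : N) : bool := has (fun k => base k s) l.

Lemma count_false T (r : seq T) : count (fun _ => false) r = 0.
Proof. by elim: r. Qed.

Lemma Good_U l : uniq l -> (forall k, k \in l -> Good (base k) (wt k)) ->
  (forall i j, i \in l -> j \in l -> i != j -> forall s, bnd s -> ~~ (base i s && base j s)) ->
  Good (U l) (sumn (map wt l)).
Proof.
elim: l => [|k l IH] /=.
  move=> _ _ _ s _. rewrite /Ncount /U /=. by elim: pairsL.
move=> /andP [kl ul] Gk Dk.
have GU : Good (U l) (sumn (map wt l)).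
  apply: IH => //.
    by move=> j hj; apply: Gk; rewrite inE hj orbT.
  by move=> i j hi hj; apply: Dk; rewrite inE ?hi ?hj orbT.
have dj : forall s', bnd s' -> ~~ (base k s' && U l s').
  move=> s' hs'; apply/negP => /andP [b1 /hasP [j jl b2]].
  have kj : k != j by apply: contraNneq kl => ->.
  have jin : j \in k :: l by rewrite inE jl orbT.
  by move: (Dk k j (mem_head _ _) jin kj s' hs'); rewrite b1 b2.
move=> s hs.
have -> : Ncount (U (k :: l)) s = Ncount (fun x => base k x || U l x) s by [].
rewrite Ncount_or // (Gk k (mem_head _ _) s hs) (GU s hs) /U /=.
have := dj s hs. rewrite /U.
case: (base k s); case: (has _ l) => //= _.
all: first [by rewrite addnCA | by rewrite addnA | done].
Qed.
Lemma lxorA : associative N.lxor.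
Proof. move=> a b c; by rewrite N.lxor_assoc. Qed.
HB.instance Definition _ := Monoid.isComLaw.Build N 0%num N.lxor lxorA N.lxor_comm N.lxor_0_l.

Definition syn (w : word 24) : N := \big[N.lxor/0%num]_(k < 24) (if w k then col k else 0%num).
Definition xw n (u d : word n) : word n := [ffun i => u i (+) d i].
Definition e2 n (i j : 'I_n) : word n := [ffun k => (k == i) || (k == j)].

Lemma syn_xw u d : syn (xw u d) = N.lxor (syn u) (syn d).
Proof.
rewrite /syn -big_split /=; apply: eq_bigr => k _; rewrite ffunE.
by case: (u k); case: (d k); rewrite ?N.lxor_nilpotent ?N.lxor_0_l ?N.lxor_0_r.
Qed.

Lemma syn_e2 (i j : 'I_24) : i != j -> syn (e2 i j) = N.lxor (col i) (col j).
Proof.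
move=> ij; rewrite /syn (bigD1 i) //= ffunE eqxx /=.
rewrite (bigD1 j) /=; last by rewrite eq_sym.
rewrite ffunE eqxx orbT big1 ?N.lxor_0_r //.
move=> k /andP [kj ki]; by rewrite ffunE (negbTE ki) (negbTE kj).
Qed.

Lemma card_setb n (u : 'I_n -> bool) : #|[set i | u i]| = \sum_(i < n) u i.
Proof.
rewrite -sum1_card big_mkcond /=; apply: eq_bigr => i _; rewrite inE; by case: (u i).
Qed.

Lemma odd_weight n (w : word n) : odd (weight w) = \big[addb/false]_(i < n) w i.
Proof.
rewrite /weight card_setb (big_morph odd oddD (erefl : odd 0 = false)).
by apply: eq_bigr => i _; case: (w i).
Qed.

Lemma odd_hdist n (u v : word n) : odd (hdist u v) = \big[addb/false]_(i < n) (u i (+) v i).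
Proof.
have -> : hdist u v = weight (xw u v).
  rewrite /hdist /weight; apply: eq_card => i; rewrite !inE ffunE.
  by case: (u i); case: (v i).
rewrite odd_weight; apply: eq_bigr => i _; by rewrite ffunE.
Qed.

Lemma parity_w n (u v : word n) : odd (weight v) = odd (weight u) (+) odd (hdist u v).
Proof.
rewrite !odd_weight odd_hdist -big_split /=; apply: eq_bigr => i _.
by case: (u i); case: (v i).
Qed.

Lemma card_pairs (f : nat -> nat -> bool) :
  #|[set p : 'I_24 * 'I_24 | (p.1 < p.2) && f p.1 p.2]| = count (fun ij => f ij.1 ij.2) pairsL.
Proof.
transitivity (\sum_(p : 'I_24 * 'I_24) ((p.1 < p.2) && f p.1 p.2 : nat)).
  rewrite -sum1_card big_mkcond /=; apply: eq_bigr => p _; rewrite inE.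
  by case: (_ && _).
rewrite -(pair_big xpredT xpredT (fun (i j : 'I_24) => ((i < j) && f i j : nat))).
rewrite /pairsL count_filter count_flatten -map_comp sumnE big_map.
rewrite -(big_mkord xpredT (fun k => \sum_(j < 24) ((k < j) && f k j : nat))).
apply: eq_bigr => i _. rewrite /comp.
rewrite -(big_mkord xpredT (fun k => ((i < k) && f i k : nat))) count_map -sum1_count [RHS]big_mkcond.
apply: eq_bigr => j _ /=. by rewrite andbC; case: (_ && _).
Qed.

Lemma step1 (x : halved_vertex 24) (Q : word 24 -> bool) :
  #|[set y : halved_vertex 24 | halved_adj x y & Q (val y)]| =
  #|[set w : word 24 | (hdist (val x) w == 2) && Q w]|.
Proof.
have -> : [set w : word 24 | (hdist (val x) w == 2) && Q w] =
          val @: [set y : halved_vertex 24 | halved_adj x y & Q (val y)].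
  apply/setP => w; rewrite inE; apply/idP/imsetP.
  - move=> /andP [h2 Qw].
    have ev : ~~ odd (weight w).
      rewrite (parity_w (val x)) (eqP h2) /= addbF; exact: (valP x).
    by exists (exist _ w ev) => //; rewrite inE /halved_adj /= h2 Qw.
  - by case=> y; rewrite inE => /andP [a q] ->; move: a; rewrite /halved_adj => ->.
by rewrite card_imset //; exact: val_inj.
Qed.

Lemma hdist_xw n (u d : word n) : hdist u (xw u d) = weight d.
Proof.
rewrite /hdist /weight; apply: eq_card => i; rewrite !inE ffunE.
by case: (u i); case: (d i).
Qed.

Lemma xwK n (u : word n) : involutive (xw u).
Proof. move=> d; apply/ffunP => i; rewrite !ffunE; by case: (u i); case: (d i). Qed.

Lemma step2 (x : word 24) (Q : word 24 -> bool) :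
  #|[set w : word 24 | (hdist x w == 2) && Q w]| =
  #|[set d : word 24 | (weight d == 2) && Q (xw x d)]|.
Proof.
have -> : [set d : word 24 | (weight d == 2) && Q (xw x d)] =
          xw x @^-1: [set w : word 24 | (hdist x w == 2) && Q w].
  by apply/setP => d; rewrite !inE hdist_xw.
by rewrite card_preimset //; apply: inv_inj; exact: xwK.
Qed.

Lemma step3 (Q : word 24 -> bool) :
  #|[set d : word 24 | (weight d == 2) && Q d]| =
  #|[set p : 'I_24 * 'I_24 | (p.1 < p.2) && Q (e2 p.1 p.2)]|.
Proof.
have -> : [set d : word 24 | (weight d == 2) && Q d] =
          (fun p : 'I_24 * 'I_24 => e2 p.1 p.2) @: [set p : 'I_24 * 'I_24 | (p.1 < p.2) && Q (e2 p.1 p.2)].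
  apply/setP => d; rewrite inE; apply/idP/imsetP.
  - move=> /andP [/cards2P [a [b [ab E]]] Qd].
    have Ed : forall k, d k = (k == a) || (k == b).
      by move=> k; move/setP: E => /(_ k); rewrite !inE.
    case: (ltngtP a b) => h.
    + have de : d = e2 a b by apply/ffunP => k; rewrite ffunE Ed.
      by exists (a, b) => //; rewrite inE /= h -de Qd.
    + have de : d = e2 b a by apply/ffunP => k; rewrite ffunE Ed orbC.
      by exists (b, a) => //; rewrite inE /= h -de Qd.
    + by move: ab; rewrite (val_inj h) eqxx.
  - case=> p; rewrite inE => /andP [lt Qp] ->; rewrite Qp andbT /weight.
    have -> : [set k | e2 p.1 p.2 k] = [set p.1; p.2].
      by apply/setP => k; rewrite !inE ffunE.
    rewrite cards2 (_ : (p.1 == p.2) = false) //; apply/eqP => E; by rewrite E ltnn in lt.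
rewrite card_in_imset // => [[a b] [c e]]; rewrite !inE /= => /andP [lab _] /andP [lce _] E.
have h1 := congr1 (fun g : word 24 => g a) E.
have h2 := congr1 (fun g : word 24 => g b) E.
rewrite /= !ffunE !eqxx ?orbT /= in h1 h2.
case/orP: (esym h1) => /eqP ?; case/orP: (esym h2) => /eqP ?; subst.
- by rewrite ltnn in lab.
- done.
- by move: (ltn_trans lab lce); rewrite ltnn.
- by rewrite ltnn in lab.
Qed.

Lemma card_adj (x : halved_vertex 24) (P : N -> bool) :
  #|[set y : halved_vertex 24 | halved_adj x y & P (syn (val y))]| = Ncount P (syn (val x)).
Proof.
rewrite (step1 x (fun w => P (syn w))) (step2 (val x) (fun w => P (syn w))).
rewrite (step3 (fun d => P (syn (xw (val x) d)))).
have -> : Ncount P (syn (val x)) =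
  #|[set p : 'I_24 * 'I_24 | (p.1 < p.2) && P (N.lxor (N.lxor (syn (val x)) (col p.1)) (col p.2))]|.
  by rewrite (card_pairs (fun i j => P (N.lxor (N.lxor (syn (val x)) (col i)) (col j)))).
apply: eq_card => p; rewrite !inE.
case h: (p.1 < p.2) => //=.
rewrite syn_xw syn_e2 ?N.lxor_assoc //.
by apply/eqP => E; rewrite E ltnn in h.
Qed.

Lemma nth_bnd (s : seq N) k : all (fun t => N.ltb t 2048) s -> bnd (nth 0%num s k).
Proof.
elim: s k => [|a s IH] [|k] /=; try by [].
- by move=> /andP [h _]; apply: lt_bnd; apply N.ltb_lt.
- by move=> /andP [_ h]; exact: IH.
Qed.

Lemma Good_base k : Good (base k) (wt k).
Proof.
rewrite /base /wt; case: (k < 8).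
- apply: Good_tr; first exact: (Good_of_b T_ok).
  apply: nth_bnd; by vm_compute.
- apply: Good_tr; first exact: (Good_of_b H_ok).
  apply: nth_bnd; by vm_compute.
Qed.

Lemma bnd_syn w : bnd (syn w).
Proof.
rewrite /syn; apply: (big_ind (fun v => bnd v)).
- by [].
- exact: bnd_lxor.
- move=> k _; case: (w k); [exact: bnd_col | by []].
Qed.

Lemma Ncount_neg P s : Ncount (fun t => ~~ P t) s = 276 - Ncount P s.
Proof.
rewrite /Ncount.
have := count_predC (fun ij : nat * nat => P (N.lxor (N.lxor s (col ij.1)) (col ij.2))) pairsL.
rewrite (_ : size pairsL = 276); last by vm_compute.
move=> <-; by rewrite addKn.
Qed.

Theorem theorem1 :
  forall c : nat,
    c \in [:: 3; 6; 8; 9; 11; 12] \/ (14 <= c <= 128) ->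
    exists C : {set halved_vertex 24},
      perfect_coloring (@halved_adj 24) C (20 + c) (256 - c) c (276 - c).
Proof.
move=> c hc.
have cc : cond c by rewrite /cond; case: hc => ->; rewrite ?orbT.
have [c0 cle] : 0 < c /\ c <= 128.
  case: hc => [h | /andP [h1 h2]]; last by split => //; apply: leq_trans h1.
  have := allP (_ : all (fun k => (0 < k) && (k <= 128)) [:: 3; 6; 8; 9; 11; 12]) c h.
  by move=> /(_ isT) /andP [].
have cin : c \in iota 0 129 by rewrite mem_iota.
have := allP S_ok c cin; rewrite cc /= => /and3P [u lt sw].
have G : Good (U (sel c)) c.
  have G0 : Good (U (sel c)) (sumn (map wt (sel c))).
    apply: Good_U => //.
    - move=> k _; exact: Good_base.
    - move=> i j hi hj ij s hs.
      have hi' : i \in iota 0 23 by rewrite mem_iota /=; exact: (allP lt).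
      have hj' : j \in iota 0 23 by rewrite mem_iota /=; exact: (allP lt).
      have := allP (allP D_ok i hi') j hj'; rewrite (negbTE ij) /= => h.
      exact: (allN_spec h hs).
  by rewrite (eqP sw) in G0.
pose C := [set y : halved_vertex 24 | (U (sel c)) (syn (val y))].
have cin_ : forall x, #|[set y | halved_adj x y & y \in C]| = Ncount (U (sel c)) (syn (val x)).
  move=> x; rewrite -card_adj; apply: eq_card => y; by rewrite !inE.
have cout : forall x, #|[set y | halved_adj x y & y \notin C]| = 276 - Ncount (U (sel c)) (syn (val x)).
  move=> x; rewrite -Ncount_neg -card_adj; apply: eq_card => y; by rewrite !inE.
have inC : forall x, (x \in C) = (U (sel c)) (syn (val x)) by move=> x; rewrite inE.
have Hin : forall x, x \in C -> #|[set y | halved_adj x y & y \in C]| = 20 + c /\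
                               #|[set y | halved_adj x y & y \notin C]| = 256 - c.
  move=> x; rewrite inC => hx; rewrite cin_ cout (G _ (bnd_syn _)) hx.
  by split => //; rewrite subnDA.
have Hout : forall x, x \notin C -> #|[set y | halved_adj x y & y \in C]| = c /\
                               #|[set y | halved_adj x y & y \notin C]| = 276 - c.
  move=> x; rewrite inC => /negbTE hx; rewrite cin_ cout (G _ (bnd_syn _)) hx.
  by [].
have ev0 : ~~ odd (weight ([ffun _ => false] : word 24)).
  rewrite /weight (_ : [set i | _] = set0) ?cards0 //.
  by apply/setP => i; rewrite !inE ffunE.
pose x0 : halved_vertex 24 := exist (fun w : word 24 => ~~ odd (weight w)) [ffun _ => false] ev0.
exists C; split; [|split; [|split]] => //.
- case: (boolP (x0 \in C)) => h.
    by apply/eqP => E; move: h; rewrite -E inE.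
  have /card_gt0P [y] : (0 < #|[set y | halved_adj x0 y & y \in C]|).
    by rewrite (proj1 (Hout x0 h)).
  rewrite inE => /andP [_ yC]; apply/eqP => E; by move: yC; rewrite -E inE.
- case: (boolP (x0 \in C)) => h; last first.
    by apply/eqP => E; move: h; rewrite E inE.
  have /card_gt0P [y] : (0 < #|[set y | halved_adj x0 y & y \notin C]|).
    rewrite (proj2 (Hin x0 h)) subn_gt0; by apply: leq_ltn_trans cle _.
  rewrite inE => /andP [_ yC]; apply/eqP => E; by move: yC; rewrite E inE.
Qed.
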